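(* Let $S$ be an inverse semigroup with zero whose semilattice of idempotents is $0$-disjunctive. Then $S$ is a Clifford semigroup if and only if $S$ contains no infinitesimals.
   Context: A semigroup is inverse if each $s$ has a unique $s^{-1}$ with $s=ss^{-1}s$, $s^{-1}=s^{-1}ss^{-1}$; its idempotents form a meet semilattice with $e\le f$ iff $e=ef$. A meet semilattice with zero is $0$-disjunctive if for all $0\ne f<e$ there exists $0\ne g\le e$ with $fg=0$. A Clifford semigroup is an inverse semigroup whose idempotents are central. An infinitesimal is a non-zero element $a$ with $a^2=0$. *)

(* Defs.v *)
Section SemigroupDefs.
Variables (S : Type) (mul : S -> S -> S).

Definition associative_op : Prop :=
  forall x y z : S, mul x (mul y z) = mul (mul x y) z.

Definition inverse_semigroup : Prop :=
  associative_op /\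
  forall s : S, exists! t : S, s = mul (mul s t) s /\ t = mul (mul t s) t.

Definition is_zero (z : S) : Prop :=
  forall s : S, mul z s = z /\ mul s z = z.

Definition idempotent (e : S) : Prop := mul e e = e.

Definition idem_le (e f : S) : Prop := e = mul e f.

Definition zero_disjunctive (z : S) : Prop :=
  forall e f : S, idempotent e -> idempotent f ->
    f <> z -> idem_le f e -> f <> e ->
    exists g : S, idempotent g /\ g <> z /\ idem_le g e /\ mul f g = z.

Definition clifford : Prop :=
  inverse_semigroup /\
  forall e : S, idempotent e -> forall s : S, mul e s = mul s e.

Definition infinitesimal (z a : S) : Prop := a <> z /\ mul a a = z.

End SemigroupDefs.

(* Main.v *)
Require Import Defs.
From Stdlib Require Import Classical.

Theorem mainTheorem17 (S : Type) (mul : S -> S -> S) (z : S) :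
  inverse_semigroup S mul ->
  is_zero S mul z ->
  zero_disjunctive S mul z ->
  (clifford S mul <-> ~ (exists a : S, infinitesimal S mul z a)).
Proof.
  intros [A Inv] Z D.
  set (inv := fun s t => s = mul (mul s t) s /\ t = mul (mul t s) t).
  assert (Uq : forall s t u, inv s t -> inv s u -> t = u).
  { intros s t u Ht Hu. destruct (Inv s) as [x [_ U]].
    rewrite <- (U t Ht), <- (U u Hu). reflexivity. }
  assert (Ex : forall s, exists t, inv s t).
  { intros s. destruct (Inv s) as [x [Hx _]]. exists x. exact Hx. }
  assert (IR : forall e X, idempotent S mul e -> mul (mul X e) e = mul X e).
  { intros e X He. rewrite <- A, He. reflexivity. }
  assert (IP : forall e f, idempotent S mul e -> idempotent S mul f ->
                idempotent S mul (mul e f)).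
  { intros e f He Hf.
    destruct (Ex (mul e f)) as [x [H1 H2]].
    assert (Hi : inv (mul e f) (mul (mul f x) e)).
    { split.
      - rewrite H1 at 1. rewrite ?A, ?(IR _ _ He), ?(IR _ _ Hf).
        reflexivity.
      - rewrite H2 at 1. rewrite ?A, ?(IR _ _ He), ?(IR _ _ Hf).
        reflexivity. }
    assert (Ex2 : x = mul (mul f x) e) by (apply (Uq _ _ _ (conj H1 H2) Hi)).
    assert (Hxi : idempotent S mul x).
    { unfold idempotent. rewrite Ex2 at 1 2.
      transitivity (mul (mul f (mul (mul x (mul e f)) x)) e);
        [rewrite ?A; reflexivity | rewrite <- H2; symmetry; exact Ex2]. }
    assert (Hxx : inv x x).
    { unfold idempotent in Hxi. split; rewrite !Hxi; reflexivity. }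
    assert (Hxa : inv x (mul e f)) by (split; [exact H2 | exact H1]).
    unfold idempotent. rewrite (Uq _ _ _ Hxa Hxx). exact Hxi. }
  assert (IC : forall e f, idempotent S mul e -> idempotent S mul f ->
                mul e f = mul f e).
  { intros e f He Hf.
    pose proof (IP e f He Hf) as Hef. pose proof (IP f e Hf He) as Hfe.
    unfold idempotent in Hef, Hfe.
    assert (H1 : inv (mul e f) (mul e f)) by (split; rewrite !Hef; reflexivity).
    assert (H2 : inv (mul e f) (mul f e)).
    { split.
      - rewrite <- Hef at 1. rewrite ?A, ?(IR _ _ He), ?(IR _ _ Hf). reflexivity.
      - rewrite <- Hfe at 1. rewrite ?A, ?(IR _ _ He), ?(IR _ _ Hf). reflexivity. }
    exact (Uq _ _ _ H1 H2). }
  assert (IdInv : forall s t, inv s t -> idempotent S mul (mul s t)).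
  { intros s t [H1 H2]. unfold idempotent. rewrite (A (mul s t) s t), <- H1. reflexivity. }
  split.
  - intros [_ C] [a [Ha Haa]].
    destruct (Ex a) as [t Ht].
    pose proof (IdInv _ _ Ht) as He.
    apply Ha. destruct Ht as [H1 _].
    rewrite H1, (C _ He a), A, Haa. apply Z.
  - intros NI.
    assert (K : forall s t, inv s t -> mul s t = mul (mul s t) (mul t s)).
    { intros s t Hst.
      pose proof (IdInv _ _ Hst) as He.
      assert (Hts : inv t s) by (destruct Hst; split; assumption).
      pose proof (IdInv _ _ Hts) as Hf.
      set (e := mul s t) in *. set (f := mul t s) in *.
      destruct (classic (e = mul e f)) as [Heq | Hne]; [exact Heq|].
      exfalso.
      assert (G : exists g, idempotent S mul g /\ g <> z /\ g = mul g e /\ mul g f = z).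
      { destruct (classic (mul e f = z)) as [Hz | Hnz].
        - exists e. split; [exact He|]. split; [congruence|].
          split; [symmetry; exact He | exact Hz].
        - assert (Hle : idem_le S mul (mul e f) e).
          { unfold idem_le. rewrite <- A, (IC f e Hf He), A, He. reflexivity. }
          destruct (D e (mul e f) He (IP _ _ He Hf) Hnz Hle (fun h => Hne (eq_sym h)))
            as [g [Hg [Hgz [Hge Hgf]]]].
          exists g. split; [exact Hg|]. split; [exact Hgz|]. split; [exact Hge|].
          rewrite Hge, <- A, (IC g (mul e f) Hg (IP _ _ He Hf)). exact Hgf. }
      destruct G as [g [Hg [Hgz [Hge Hgf]]]].
      apply NI. exists (mul g s). split.
      + intro Hgs. apply Hgz. rewrite Hge. unfold e. rewrite A, Hgs. apply Z.
      + destruct Hst as [H1 _].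
        assert (Hs : s = mul s f) by (unfold f; rewrite A; exact H1).
        transitivity (mul (mul (mul g s) (mul f g)) s).
        { rewrite Hs at 1. rewrite ?A. reflexivity. }
        rewrite (IC f g Hf Hg), Hgf, (proj2 (Z _)), (proj1 (Z _)). reflexivity. }
    assert (K2 : forall s t, inv s t -> mul s t = mul t s).
    { intros s t Hst.
      assert (Hts : inv t s) by (destruct Hst; split; assumption).
      rewrite (K s t Hst), (IC _ _ (IdInv _ _ Hst) (IdInv _ _ Hts)), <- (K t s Hts).
      reflexivity. }
    split; [exact (conj A Inv)|].
    intros e He s. destruct (Ex s) as [t Hst].
    pose proof (IdInv _ _ Hst) as Hf0.
    assert (Hts : inv t s) by (destruct Hst; split; assumption).
    pose proof (IdInv _ _ Hts) as Hf.
    destruct Hst as [H1 H2].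
    assert (Hy : inv (mul s e) (mul e t)).
    { split.
      - transitivity (mul (mul s (mul t s)) e).
        { rewrite ?A, <- H1. reflexivity. }
        transitivity (mul (mul s (mul (mul t s) e)) e); [rewrite ?A, ?(IR _ _ He); reflexivity|]. rewrite <- (IC e (mul t s) He Hf). rewrite ?A, ?(IR _ _ He). reflexivity.
      - transitivity (mul e (mul (mul t s) t)).
        { rewrite <- H2. reflexivity. }
        transitivity (mul (mul e (mul (mul t s) e)) t).
        { rewrite <- (IC e (mul t s) He Hf). rewrite ?A, ?He. reflexivity. }
        rewrite ?A, ?(IR _ _ He). reflexivity. }
    pose proof (K2 _ _ Hy) as Kse.
    symmetry.
    transitivity (mul (mul (mul s e) (mul e t)) s).
    { transitivity (mul s (mul (mul t s) e)).
      { rewrite ?A, <- H1. reflexivity. }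
      rewrite <- (IC e (mul t s) He Hf). rewrite ?A, ?(IR _ _ He). reflexivity. }
    rewrite Kse.
    transitivity (mul (mul e (mul (mul t s) e)) s).
    { rewrite ?A. reflexivity. }
    rewrite <- (IC e (mul t s) He Hf).
    transitivity (mul e (mul (mul t s) s)).
    { rewrite ?A, ?He. reflexivity. }
    rewrite <- (K2 s t (conj H1 H2)), <- H1. reflexivity.
Qed.
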